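(* For $n\ge 1$, the graph $\mathcal{SP}_L(IS_n)$ is isomorphic to the intersection graph of the non-empty subsets of an $n$-element set, i.e. the simple graph whose vertices are the non-empty subsets of $\{1,\dots,n\}$, two distinct subsets being adjacent iff they intersect.
   Context: $IS_n$ is the set of all partial injective maps of an $n$-element set $X$, with composition written left to right ($\alpha\beta$ means first $\alpha$, then $\beta$); its zero is the empty map. For $a\in IS_n$, $S^1a=\{sa:s\in IS_n\}\cup\{a\}$. $\mathcal{P}_L(IS_n)$ is the simple graph on the non-empty partial injections with distinct $a,b$ adjacent iff $S^1a\cap S^1b$ contains a non-empty map. $L_a$ is the Green $\mathcal{L}$-class of $a$ ($a\,\mathcal{L}\,b$ iff $S^1a=S^1b$). $\mathcal{SP}_L(IS_n)$ is the simple graph with vertex set $\{L_a: a \text{ non-empty}\}$, distinct $L_a,L_b$ adjacent iff $a,b$ are adjacent in $\mathcal{P}_L(IS_n)$. *)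

(* Defs.v *)
From mathcomp Require Import all_boot.
Set Implicit Arguments. Unset Strict Implicit. Unset Printing Implicit Defensive.

(* The n-element set X is 'I_n.  A partial map X -> X is a finite function
   'I_n -> option 'I_n (None = undefined). *)
Definition pmap (n : nat) := {ffun 'I_n -> option 'I_n}.

Definition is_pinj n (f : pmap n) : bool :=
  [forall x, forall y, ((f x != None) && (f x == f y)) ==> (x == y)].

Definition IS (n : nat) := {f : pmap n | is_pinj f}.

Definition emptym n : pmap n := [ffun _ => None].

(* composition written left to right: (a b) x = b (a x) *)
Definition pcomp n (a b : pmap n) : pmap n := [ffun x => obind b (a x)].

Definition S1 n (a : IS n) : {set pmap n} :=
  [set f | [exists s : IS n, f == pcomp (val s) (val a)]] :|: [set val a].

Definition PLadj n (a b : IS n) : bool :=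
  (a != b) && [exists f in S1 a :&: S1 b, f != emptym n].

Definition Lclass n (a : IS n) : {set IS n} := [set b | S1 b == S1 a].

Arguments emptym : clear implicits.
Definition SPvert (n : nat) : pred {set IS n} :=
  fun L => [exists a : IS n, (val a != emptym n) && (L == Lclass a)].
Definition SPV (n : nat) := {L : {set IS n} | @SPvert n L}.

Definition SPadj n (L1 L2 : SPV n) : bool :=
  (L1 != L2) &&
  [exists a : IS n, exists b : IS n,
     [&& Lclass a == val L1, Lclass b == val L2 & PLadj a b]].

Definition IGV (n : nat) := {A : {set 'I_n} | A != set0}.
Definition IGadj n (A B : IGV n) : bool :=
  (A != B) && (val A :&: val B != set0).

Definition graph_iso (V W : finType) (eV : rel V) (eW : rel W) : Prop :=
  exists f : V -> W, bijective f /\ forall x y, eV x y = eW (f x) (f y).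

(* Main.v *)
Require Import Defs.
From mathcomp Require Import all_boot.
Set Implicit Arguments. Unset Strict Implicit. Unset Printing Implicit Defensive.

Section S.
Variable n : nat.
Implicit Types (f g : Defs.pmap n) (a b : IS n).

Lemma pinjP f : reflect (forall x y z, f x = Some z -> f y = Some z -> x = y) (is_pinj f).
Proof.
apply: (iffP forallP) => [H x y z hx hy | H x].
  by have := forallP (H x) y; rewrite hx hy eqxx /= => /eqP.
apply/forallP=> y; apply/implyP=> /andP[]; case E: (f x) => [z|] //= _ /eqP E2.
by apply/eqP; exact: H E (esym E2).
Qed.

Definition img f : {set 'I_n} := [set y | [exists x, f x == Some y]].

Lemma imgP f y : reflect (exists x, f x = Some y) (y \in img f).
Proof. by rewrite inE; apply: (iffP existsP) => [[x /eqP]|[x /eqP]]; eauto. Qed.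

Lemma pcomp_pinj f g : is_pinj f -> is_pinj g -> is_pinj (Defs.pcomp f g).
Proof.
move=> /pinjP Ha /pinjP Hb; apply/pinjP => x y z; rewrite !ffunE.
case ax: (f x) => [u|] //=; case ay: (f y) => [v|] //= bu bv.
have uv := Hb _ _ _ bu bv; subst; exact: Ha ax ay.
Qed.

Lemma img_pcomp f g : img (Defs.pcomp f g) \subset img g.
Proof.
apply/subsetP => y /imgP [x]; rewrite ffunE; case: (f x) => [u|] //= h.
by apply/imgP; eauto.
Qed.

Definition binv g : Defs.pmap n := [ffun y => [pick x | g x == Some y]].

Lemma binvS g y x : binv g y = Some x -> g x = Some y.
Proof. by rewrite ffunE; case: pickP => // x' /eqP h [<-]. Qed.

Lemma binv_pinj g : is_pinj (binv g).
Proof.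
apply/pinjP => y1 y2 z /binvS h1 /binvS h2; by move: h1; rewrite h2 => -[].
Qed.

Lemma binv_img g y : y \in img g -> exists x, binv g y = Some x.
Proof.
rewrite ffunE; case: pickP => [x _| H]; first by eauto.
by case/imgP => x hx; move: (H x); rewrite hx eqxx.
Qed.

Lemma pcomp_binv f g : img f \subset img g -> Defs.pcomp (Defs.pcomp f (binv g)) g = f.
Proof.
move=> sub; apply/ffunP => x; rewrite !ffunE.
case fx: (f x) => [y|] //=.
have : y \in img g by apply: (subsetP sub); apply/imgP; eauto.
by case/binv_img => z hz; rewrite hz /=; exact: binvS hz.
Qed.

Lemma S1_char a f : (f \in S1 a) = is_pinj f && (img f \subset img (val a)).
Proof.
rewrite /S1 !inE; apply/idP/idP.
  case/orP => [/existsP [s /eqP ->] | /eqP ->].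
    by rewrite pcomp_pinj ?(valP s) ?(valP a) // img_pcomp.
  by rewrite (valP a) subxx.
case/andP => pf sub; apply/orP; left; apply/existsP.
exists (exist _ (Defs.pcomp f (binv (val a))) (pcomp_pinj pf (binv_pinj _))).
by rewrite /= pcomp_binv.
Qed.

Lemma S1_eq a b : (S1 a == S1 b) = (img (val a) == img (val b)).
Proof.
apply/eqP/eqP => [E | E].
  apply/eqP; rewrite eqEsubset; apply/andP; split.
    have : val a \in S1 b by rewrite -E S1_char (valP a) subxx.
    by rewrite S1_char => /andP[].
  have : val b \in S1 a by rewrite E S1_char (valP b) subxx.
  by rewrite S1_char => /andP[].
by apply/setP => f; rewrite !S1_char E.
Qed.

Lemma inLclass a b : (b \in Lclass a) = (img (val b) == img (val a)).
Proof. by rewrite inE S1_eq. Qed.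

Lemma Lclass_eq a b : (Lclass a == Lclass b) = (img (val a) == img (val b)).
Proof.
apply/eqP/eqP => [E|E].
  have : a \in Lclass b by rewrite -E inLclass.
  by rewrite inLclass => /eqP.
by apply/setP => c; rewrite !inLclass E.
Qed.

Definition imgL (L : {set IS n}) := \bigcup_(a in L) img (val a).

Lemma imgL_Lclass a : imgL (Lclass a) = img (val a).
Proof.
apply/setP=> y; apply/bigcupP/idP => [[b]|hy].
  by rewrite inLclass => /eqP <-.
by exists a => //; rewrite inLclass.
Qed.

Definition pid (A : {set 'I_n}) : Defs.pmap n := [ffun x => if x \in A then Some x else None].

Lemma pid_pinj A : is_pinj (pid A).
Proof.
apply/pinjP => x y z; rewrite !ffunE; case: ifP => _ // [->]; by case: ifP => _ // [->].
Qed.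

Lemma img_pid A : img (pid A) = A.
Proof.
apply/setP => y; apply/imgP/idP => [[x]|hy].
  by rewrite ffunE; case: ifP => // hx [<-].
by exists y; rewrite ffunE hy.
Qed.

Definition pidIS A : IS n := exist _ (pid A) (pid_pinj A).

Lemma img0 f : (img f == set0) = (f == emptym n).
Proof.
apply/eqP/eqP => [E|->].
  apply/ffunP=> x; rewrite ffunE; case fx: (f x) => [y|] //.
  have : y \in img f by apply/imgP; eauto.
  by rewrite E inE.
by apply/setP=> y; rewrite in_set0; apply/negbTE/imgP => -[x]; rewrite ffunE.
Qed.

Lemma F_ok (L : SPV n) : imgL (val L) != set0.
Proof.
case: L => L /= hL; case/existsP: hL => a /andP [na /eqP ->].
by rewrite imgL_Lclass img0.
Qed.

Definition F (L : SPV n) : IGV n := exist _ (imgL (val L)) (F_ok L).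

Lemma G_ok (A : IGV n) : SPvert (Lclass (pidIS (val A))).
Proof.
apply/existsP; exists (pidIS (val A)); rewrite eqxx andbT /= -img0 img_pid.
exact: (valP A).
Qed.

Definition G (A : IGV n) : SPV n := exist (fun L => SPvert L) (Lclass (pidIS (val A))) (G_ok A).

Lemma FK : cancel F G.
Proof.
move=> [L hL]; apply: val_inj => /=.
case/existsP: (hL) => a /andP [_ /eqP E]; rewrite E.
rewrite imgL_Lclass; apply/eqP; by rewrite Lclass_eq /= img_pid.
Qed.

Lemma GK : cancel G F.
Proof. move=> [A hA]; apply: val_inj => /=. by rewrite imgL_Lclass /= img_pid. Qed.

Lemma PLadj_img a b : a != b ->
  PLadj a b = (img (val a) :&: img (val b) != set0).
Proof.
move=> ab; rewrite /PLadj ab /=.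
apply/existsP/set0Pn => [[f /andP [hf nf]] | [y hy]].
  rewrite inE !S1_char in hf; case/andP: hf => /andP[_ sa] /andP[_ sb].
  rewrite -img0 in nf; case/set0Pn: nf => y hy; exists y.
  by rewrite inE (subsetP sa _ hy) (subsetP sb _ hy).
exists (pid [set y]); apply/andP; split.
  rewrite inE !S1_char pid_pinj img_pid !sub1set.
  by move: hy; rewrite inE.
rewrite -img0 img_pid; apply/set0Pn; exists y; by rewrite inE.
Qed.

Lemma rep (L : SPV n) : exists2 a, val a != emptym n & val L = Lclass a.
Proof. by case/existsP: (valP L) => a /andP[? /eqP]; exists a. Qed.

End S.

Theorem mainTheorem16 (n : nat) : 1 <= n ->
  graph_iso (V := SPV n) (W := IGV n) (@SPadj n) (@IGadj n).
Proof.
move=> _; exists (@F n); split; first exact: (Bijective (@FK n) (@GK n)).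
move=> L1 L2; rewrite /SPadj /IGadj (inj_eq (can_inj (@FK n))).
case: (L1 =P L2) => //= ne.
have [a1 _ e1] := rep L1; have [a2 _ e2] := rep L2.
rewrite e1 e2 !imgL_Lclass.
apply/existsP/idP.
  case=> a /existsP [b /and3P [/eqP ea /eqP eb pab]].
  have ia : img (val a) = img (val a1) by apply/eqP; rewrite -Lclass_eq ea.
  have ib : img (val b) = img (val a2) by apply/eqP; rewrite -Lclass_eq eb.
  have ab : a != b.
    by apply/eqP => abe; apply: ne; apply: val_inj; rewrite e1 e2 -ea -eb abe.
  by rewrite PLadj_img // ia ib in pab.
move=> h; exists a1; apply/existsP; exists a2; rewrite !eqxx /=.
rewrite PLadj_img //.
by apply/eqP => abe; apply: ne; apply: val_inj; rewrite e1 e2 abe.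
Qed.
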